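(* Let $g\in\mathcal{G}$. Then $g$ is predictable if and only if for every sub-polynomial function $\epsilon>0$ there exists a sub-polynomial function $h$ such that for all $x\in\mathbb{N}$ and all $y\in[1,x/h(x))$ satisfying $x+y\notin\delta_{\epsilon(x)}(g,x)$ it holds that $g(y)\ge g(x)/h(x)$.
   Context: $\mathcal{G}=\{g:\mathbb{Z}_{\ge0}\to\mathbb{R}: g(0)=0,\ g(1)=1,\ g(x)>0\ \forall x>0\}$. A function $f:\mathbb{R}_{\ge0}\to\mathbb{R}_{\ge0}$ is sub-polynomial if for every $\alpha>0$, $\lim_{x\to\infty}x^\alpha f(x)=\infty$ and $\lim_{x\to\infty}x^{-\alpha}f(x)=0$. For $x\in\mathbb{N}$ and $\epsilon>0$ let $\delta_\epsilon(g,x)=\{y\in\mathbb{N}: |g(y)-g(x)|\le\epsilon g(x)\}$. $g$ is predictable if for every $0<\gamma<1$ and every sub-polynomial $\epsilon$ there is $N$ such that for all $x\ge N$ and all $y\in[1,x^{1-\gamma})$ with $x+y\notin\delta_{\epsilon(x)}(g,x)$ we have $g(y)\ge x^{-\gamma}g(x)$. *)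

(* Defs.v *)
From Stdlib Require Export Reals.
Open Scope R_scope.

Definition in_G (g : nat -> R) : Prop :=
  g 0%nat = 0 /\ g 1%nat = 1 /\ forall x : nat, (0 < x)%nat -> 0 < g x.

(* f : R_{>=0} -> R_{>=0} (modelled on R, nonnegative on [0,oo)) is
   sub-polynomial: for every alpha > 0, x^alpha f(x) -> +oo and
   x^(-alpha) f(x) -> 0 as x -> +oo. *)
Definition sub_polynomial (f : R -> R) : Prop :=
  (forall x, 0 <= x -> 0 <= f x) /\
  forall alpha : R, 0 < alpha ->
    (forall M : R, exists N : R, forall x : R, N <= x -> M < Rpower x alpha * f x) /\
    (forall e : R, 0 < e -> exists N : R, forall x : R, N <= x ->
        Rabs (Rpower x (- alpha) * f x) < e).

Definition delta (eps : R) (g : nat -> R) (x : nat) : nat -> Prop :=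
  fun y => Rabs (g y - g x) <= eps * g x.

Definition predictable (g : nat -> R) : Prop :=
  forall gamma : R, 0 < gamma < 1 ->
  forall eps : R -> R, sub_polynomial eps ->
  exists N : nat, forall x : nat, (N <= x)%nat ->
  forall y : nat, (1 <= y)%nat -> INR y < Rpower (INR x) (1 - gamma) ->
    ~ delta (eps (INR x)) g x (x + y)%nat ->
    g y >= Rpower (INR x) (- gamma) * g x.

(* Main.v *)
Require Import Defs.
From Stdlib Require Import Reals.
From Stdlib Require Import Lra Lia ZArith IndefiniteDescription.
Open Scope R_scope.

Lemma floor_INR (x : nat) : Z.to_nat (Int_part (INR x)) = x.
Proof.
  destruct (base_Int_part (INR x)) as [H1 H2].
  set (z := Int_part _) in *. clearbody z.
  rewrite INR_IZR_INZ in H1, H2.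
  assert (A : (z <= Z.of_nat x)%Z) by (apply le_IZR; exact H1).
  assert (B : (0 < z - Z.of_nat x + 1)%Z).
  { apply lt_0_IZR. rewrite plus_IZR, minus_IZR. simpl. lra. }
  assert (Hz : z = Z.of_nat x) by lia. rewrite Hz. apply Nat2Z.id.
Qed.

Lemma floor_ge (t : R) (m : nat) : INR m + 1 <= t -> (m <= Z.to_nat (Int_part t))%nat.
Proof.
  intros Ht. destruct (base_Int_part t) as [H1 H2].
  rewrite INR_IZR_INZ in Ht.
  assert (B : (Z.of_nat m < Int_part t)%Z).
  { apply lt_IZR. lra. }
  lia.
Qed.

Lemma nat_above (r : R) : exists n : nat, r <= INR n.
Proof.
  destruct (archimed (Rabs r)) as [H1 _].
  exists (Z.to_nat (up (Rabs r))).
  assert (0 <= Rabs r) by apply Rabs_pos.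
  assert (0 <= up (Rabs r))%Z by (apply le_IZR; lra).
  rewrite INR_IZR_INZ, Z2Nat.id by lia.
  pose proof (Rle_abs r). lra.
Qed.

Lemma Rpower_pos (t a : R) : 0 < Rpower t a.
Proof. unfold Rpower; apply exp_pos. Qed.

Lemma rp_big (b B : R) : 0 < b -> exists N, 1 <= N /\ forall t, N <= t -> B < Rpower t b.
Proof.
  intros Hb. set (c := (Rabs B + 1) / b).
  exists (exp c + 1). split. { pose proof (exp_pos c). lra. }
  intros t Ht.
  assert (Hc : c < ln t).
  { rewrite <- (ln_exp c) at 1. apply ln_increasing. apply exp_pos. lra. }
  unfold Rpower.
  assert (E: b * c = Rabs B + 1) by (unfold c; field; lra).
  assert (b * c < b * ln t) by (apply Rmult_lt_compat_l; lra).
  assert (exp (Rabs B + 1) < exp (b * ln t)) by (apply exp_increasing; lra).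
  assert (1 + (Rabs B + 1) < exp (Rabs B + 1)).
  { apply exp_ineq1. pose proof (Rabs_pos B). lra. }
  pose proof (Rle_abs B). lra.
Qed.

Lemma rp_small (b e : R) : 0 < b -> 0 < e -> exists N, 1 <= N /\ forall t, N <= t -> Rpower t (- b) < e.
Proof.
  intros Hb He. destruct (rp_big b (/ e) Hb) as [N [HN1 HN]].
  exists N. split; [exact HN1|]. intros t Ht.
  rewrite Rpower_Ropp. specialize (HN t Ht).
  rewrite <- (Rinv_inv e). apply Rinv_lt_contravar; [|exact HN].
  apply Rmult_lt_0_compat. apply Rinv_0_lt_compat; lra. apply Rpower_pos.
Qed.

Fixpoint search (M : nat -> nat) (n k : nat) : nat :=
  match k with
  | O => O
  | S k' => if (M k <=? n)%nat then k else search M n k'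
  end.

Lemma search_ok M n k : search M n k = O \/ (M (search M n k) <= n)%nat.
Proof.
  induction k as [|k IH]; simpl; [now left|].
  destruct (Nat.leb_spec (M (S k)) n); [right; exact H|exact IH].
Qed.

Lemma search_max M n k j : (j <= k)%nat -> (M j <= n)%nat -> (j <= search M n k)%nat.
Proof.
  induction k as [|k IH]; intros Hj HM; simpl; [lia|].
  destruct (Nat.leb_spec (M (S k)) n); [lia|].
  assert (j <> S k) by (intro; subst; lia). apply IH; lia.
Qed.

Definition gam (k : nat) : R := / (INR k + 2).

Lemma gam_pos k : 0 < gam k.
Proof. unfold gam. apply Rinv_0_lt_compat. pose proof (pos_INR k). lra. Qed.

Lemma gam_lt1 k : gam k < 1.
Proof.
  unfold gam. pose proof (pos_INR k). rewrite <- Rinv_1.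
  apply Rinv_lt_contravar; lra.
Qed.

Lemma gam_anti k j : (k <= j)%nat -> gam j <= gam k.
Proof.
  intros H. unfold gam. apply Rinv_le_contravar.
  pose proof (pos_INR k). lra. apply le_INR in H. lra.
Qed.

Lemma Rpower_ge1 t a : 1 <= t -> 0 <= a -> 1 <= Rpower t a.
Proof.
  intros Ht Ha. assert (E : Rpower t 0 = 1) by (unfold Rpower; rewrite Rmult_0_l; apply exp_0).
  rewrite <- E. apply Rle_Rpower; lra.
Qed.

Lemma split_pow (x g : R) : 0 < x -> Rpower x (1 - g) = x / Rpower x g.
Proof.
  intros Hx. unfold Rminus. rewrite Rpower_plus, Rpower_1 by exact Hx.
  rewrite Rpower_Ropp. reflexivity.
Qed.

Lemma forward (g : nat -> R) (Hg : in_G g) :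
  predictable g ->
  (forall eps : R -> R, sub_polynomial eps -> (forall t, 0 < t -> 0 < eps t) ->
   exists h : R -> R, sub_polynomial h /\ (forall t, 0 < t -> 0 < h t) /\
     forall x : nat, forall y : nat, (1 <= y)%nat -> INR y < INR x / h (INR x) ->
       ~ delta (eps (INR x)) g x (x + y)%nat ->
       g y >= g x / h (INR x)).
Proof.
  intros Hp eps Heps Hepos.
  destruct Hg as [Hg0 [Hg1 Hgp]].
  assert (HQ : forall k, exists N : nat, forall x : nat, (N <= x)%nat ->
    forall y : nat, (1 <= y)%nat -> INR y < Rpower (INR x) (1 - gam k) ->
    ~ delta (eps (INR x)) g x (x + y)%nat ->
    g y >= Rpower (INR x) (- gam k) * g x).
  { intros k. apply Hp; [split; [apply gam_pos|apply gam_lt1]|exact Heps]. }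
  set (Nf := fun k => proj1_sig (constructive_indefinite_description _ (HQ k))).
  assert (HNf : forall k x, (Nf k <= x)%nat ->
    forall y : nat, (1 <= y)%nat -> INR y < Rpower (INR x) (1 - gam k) ->
    ~ delta (eps (INR x)) g x (x + y)%nat ->
    g y >= Rpower (INR x) (- gam k) * g x).
  { intros k. unfold Nf. destruct (constructive_indefinite_description _ (HQ k)) as [N HN].
    exact HN. }
  clearbody Nf.
  set (M := fun k => (Nf k + k)%nat).
  set (K := fun n => search M n n).
  set (h := fun t => if Rle_dec (INR (M O) + 1) t
                     then Rpower t (gam (K (Z.to_nat (Int_part t)))) else t + 1).
  exists h. split; [|split].
  - split.
    + intros t Ht. unfold h. destruct (Rle_dec _ _).
      * left; apply Rpower_pos.
      * lra.
    + intros a Ha. split.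
      * intros B. destruct (rp_big a (Rabs B) Ha) as [N [HN1 HN]].
        exists (Rmax N (INR (M O) + 1)). intros t Ht.
        pose proof (Rmax_l N (INR (M O) + 1)). pose proof (Rmax_r N (INR (M O) + 1)).
        unfold h. destruct (Rle_dec _ _) as [_|C]; [|lra].
        pose proof (HN t ltac:(lra)).
        pose proof (Rpower_ge1 t (gam (K (Z.to_nat (Int_part t)))) ltac:(lra)
           ltac:(left; apply gam_pos)).
        pose proof (Rle_abs B). pose proof (Rpower_pos t a). nra.
      * intros e He.
        destruct (nat_above (2 / a)) as [k0 Hk0].
        assert (Hg0' : gam k0 <= a / 2).
        { unfold gam. replace (a / 2) with (/ (2 / a)) by (field; lra).
          apply Rinv_le_contravar. apply Rdiv_lt_0_compat; lra. lra. }
        destruct (rp_small (a / 2) e ltac:(lra) He) as [N [HN1 HN]].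
        exists (Rmax N (Rmax (INR (M O) + 1) (INR (M k0) + 1))). intros t Ht.
        pose proof (Rmax_l N (Rmax (INR (M O) + 1) (INR (M k0) + 1))).
        pose proof (Rmax_r N (Rmax (INR (M O) + 1) (INR (M k0) + 1))).
        pose proof (Rmax_l (INR (M O) + 1) (INR (M k0) + 1)).
        pose proof (Rmax_r (INR (M O) + 1) (INR (M k0) + 1)).
        unfold h. destruct (Rle_dec _ _) as [_|C]; [|lra].
        set (n := Z.to_nat (Int_part t)).
        assert (Hn : (M k0 <= n)%nat) by (apply floor_ge; lra).
        assert (Hk : (k0 <= K n)%nat).
        { unfold K. apply search_max; [unfold M in Hn; lia|exact Hn]. }
        pose proof (gam_anti _ _ Hk).
        rewrite <- Rpower_plus. rewrite Rabs_pos_eq by (left; apply Rpower_pos).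
        eapply Rle_lt_trans; [|apply (HN t); lra].
        apply Rle_Rpower; lra.
  - intros t Ht. unfold h. destruct (Rle_dec _ _); [apply Rpower_pos|lra].
  - intros x y Hy Hyx Hd.
    assert (HyR : 1 <= INR y) by (apply (le_INR 1); exact Hy).
    unfold h in *. destruct (Rle_dec _ _) as [Hle|Hn].
    + rewrite floor_INR in *.
      assert (HxM : (M O + 1 <= x)%nat).
      { apply INR_le. rewrite plus_INR. simpl. lra. }
      assert (Hx0 : 0 < INR x) by (apply (lt_INR 0); lia).
      assert (HN : (Nf (K x) <= x)%nat).
      { destruct (search_ok M x x) as [E|E]; fold (K x) in E.
        - rewrite E. unfold M in HxM. lia.
        - unfold M in E. lia. }
      specialize (HNf (K x) x HN y Hy).
      rewrite split_pow in HNf by exact Hx0.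
      specialize (HNf Hyx Hd). rewrite Rpower_Ropp in HNf.
      unfold Rdiv. rewrite Rmult_comm. exact HNf.
    + exfalso. pose proof (pos_INR x).
      assert (E : INR x / (INR x + 1) * (INR x + 1) = INR x) by (field; lra).
      nra.
Qed.

Lemma backward (g : nat -> R) (Hg : in_G g) :
  (forall eps : R -> R, sub_polynomial eps -> (forall t, 0 < t -> 0 < eps t) ->
   exists h : R -> R, sub_polynomial h /\ (forall t, 0 < t -> 0 < h t) /\
     forall x : nat, forall y : nat, (1 <= y)%nat -> INR y < INR x / h (INR x) ->
       ~ delta (eps (INR x)) g x (x + y)%nat ->
       g y >= g x / h (INR x)) -> predictable g.
Proof.
  intros HR gamma Hgam eps Heps.
  destruct Hg as [Hg0 [Hg1 Hgp]].
  destruct Heps as [Heps0 Heps1].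
  destruct (proj1 (Heps1 1 Rlt_0_1) 0) as [N0 HN0].
  assert (Hev : forall t, N0 <= t -> 0 < eps t).
  { intros t Ht. specialize (HN0 t Ht). pose proof (Rpower_pos t 1).
    destruct (Rlt_le_dec 0 (eps t)) as [|C]; [assumption|].
    exfalso. assert (Rpower t 1 * eps t <= 0) by nra. lra. }
  set (eps' := fun t => if Rlt_dec 0 (eps t) then eps t else 1).
  assert (Heq : forall t, N0 <= t -> eps' t = eps t).
  { intros t Ht. unfold eps'. destruct (Rlt_dec _ _) as [|C]; [reflexivity|].
    exfalso; apply C; auto. }
  assert (Hsp : sub_polynomial eps').
  { split.
    - intros t Ht. unfold eps'. destruct (Rlt_dec _ _); lra.
    - intros a Ha. destruct (Heps1 a Ha) as [A B]. split.
      + intros Mx. destruct (A Mx) as [N HN]. exists (Rmax N N0). intros t Ht.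
        pose proof (Rmax_l N N0). pose proof (Rmax_r N N0).
        rewrite Heq by lra. apply HN; lra.
      + intros e He. destruct (B e He) as [N HN]. exists (Rmax N N0). intros t Ht.
        pose proof (Rmax_l N N0). pose proof (Rmax_r N N0).
        rewrite Heq by lra. apply HN; lra. }
  assert (Hpos : forall t, 0 < t -> 0 < eps' t).
  { intros t _. unfold eps'. destruct (Rlt_dec _ _); lra. }
  destruct (HR eps' Hsp Hpos) as [h [[Hh0 Hh1] [Hhp Hh]]].
  destruct (proj2 (Hh1 gamma (proj1 Hgam)) 1 Rlt_0_1) as [N1 HN1].
  destruct (nat_above (Rmax 1 (Rmax N0 N1))) as [N HN].
  pose proof (Rmax_l 1 (Rmax N0 N1)). pose proof (Rmax_r 1 (Rmax N0 N1)).
  pose proof (Rmax_l N0 N1). pose proof (Rmax_r N0 N1).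
  exists N. intros x Hx y Hy Hyx Hd.
  apply le_INR in Hx.
  set (t := INR x) in *.
  assert (Ht : 0 < t) by lra.
  assert (Hgx : 0 < g x).
  { apply Hgp. apply INR_lt. simpl. fold t. lra. }
  specialize (HN1 t ltac:(lra)).
  pose proof (Rpower_pos t gamma) as Pg.
  pose proof (Hhp t Ht) as Ph.
  rewrite Rpower_Ropp in HN1.
  rewrite Rabs_pos_eq in HN1 by (apply Rmult_le_pos; [left; apply Rinv_0_lt_compat; lra| lra]).
  assert (Hlt : h t < Rpower t gamma).
  { apply (Rmult_lt_reg_l (/ Rpower t gamma)). apply Rinv_0_lt_compat; lra.
    rewrite Rinv_l by lra. exact HN1. }
  assert (Hdiv : t / Rpower t gamma < t / h t).
  { unfold Rdiv. apply Rmult_lt_compat_l; [lra|]. apply Rinv_lt_contravar; nra. }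
  rewrite split_pow in Hyx by exact Ht.
  assert (Hd' : ~ delta (eps' t) g x (x + y)%nat).
  { rewrite Heq by lra. exact Hd. }
  specialize (Hh x y Hy ltac:(fold t; lra) Hd').
  rewrite Rpower_Ropp.
  assert (g x / Rpower t gamma <= g x / h t).
  { unfold Rdiv. apply Rmult_le_compat_l; [lra|]. apply Rinv_le_contravar; lra. }
  unfold Rdiv in *. fold t in Hh. lra.
Qed.

Theorem proposition20 (g : nat -> R) (Hg : in_G g) :
  predictable g <->
  (forall eps : R -> R, sub_polynomial eps -> (forall t, 0 < t -> 0 < eps t) ->
   exists h : R -> R, sub_polynomial h /\ (forall t, 0 < t -> 0 < h t) /\
     forall x : nat, forall y : nat, (1 <= y)%nat -> INR y < INR x / h (INR x) ->
       ~ delta (eps (INR x)) g x (x + y)%nat ->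
       g y >= g x / h (INR x)).
Proof.
  split; [apply forward; exact Hg|apply backward; exact Hg].
Qed.
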